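(* Let $A$ be an associative (not necessarily unital) algebra over a field $F$, let $q\in F$ with $q\ne 1$, and let $\sigma\in S_n$ satisfy $\sigma(1)\neq 1$ and $\sigma(n)\neq n$. If $A$ satisfies the identity $x_1\cdots x_n=q\,x_{\sigma(1)}\cdots x_{\sigma(n)}$, then $A$ is eventually commutative, i.e. there is some $k$ such that $A$ satisfies $x_1\cdots x_k=x_{\tau(1)}\cdots x_{\tau(k)}$ for all $\tau\in S_k$.
   Context: An identity is satisfied by $A$ if it holds upon substituting arbitrary elements of $A$ for the variables. *)

(* Defs.v *)
From HB Require Import structures.
From mathcomp Require Import all_boot all_order all_algebra all_fingroup.
Set Implicit Arguments. Unset Strict Implicit. Unset Printing Implicit Defensive.
Import GRing.Theory.
Local Open Scope ring_scope.

Definition assoc_algebra_mul (F : fieldType) (A : lmodType F)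
    (mul : A -> A -> A) : Prop :=
  [/\ (forall x y z, mul x (mul y z) = mul (mul x y) z),
      (forall (a : F) x y z, mul (a *: x + y) z = a *: mul x z + mul y z)
    & (forall (a : F) x y z, mul x (a *: y + z) = a *: mul x y + mul x z)].

(* Product of a nonempty list, left to right: s_0 s_1 ... s_m
   (the empty product is set to 0; it is never used below). *)
Definition seqprod (A : Type) (zero : A) (mul : A -> A -> A) (s : seq A) : A :=
  if s is a :: t then foldl mul a t else zero.

Definition wordprod (F : fieldType) (A : lmodType F) (mul : A -> A -> A)
    (n : nat) (x : 'I_n -> A) : A :=
  seqprod 0 mul [seq x i | i <- enum 'I_n].

Definition satisfies_qperm_id (F : fieldType) (A : lmodType F)
    (mul : A -> A -> A) (n : nat) (q : F) (s : 'S_n) : Prop :=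
  forall x : 'I_n -> A, wordprod mul x = q *: wordprod mul (fun i => x (s i)).

Definition satisfies_all_perm_ids (F : fieldType) (A : lmodType F)
    (mul : A -> A -> A) (k : nat) : Prop :=
  forall (t : 'S_k) (x : 'I_k -> A), wordprod mul x = wordprod mul (fun i => x (t i)).

Definition eventually_commutative (F : fieldType) (A : lmodType F)
    (mul : A -> A -> A) : Prop :=
  exists N : nat, forall k : nat, (N <= k)%N -> satisfies_all_perm_ids mul k.

(* Main.v *)
Require Import Defs.
From HB Require Import structures.
From mathcomp Require Import all_boot all_order all_algebra all_fingroup.
From mathcomp Require Import zify.
Import GRing.Theory.


Lemma foldlK (T : Type) (mul : T -> T -> T)
  (Hass : forall x y z, mul x (mul y z) = mul (mul x y) z) s :
  forall x c, foldl mul (mul x c) s = mul x (foldl mul c s).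
Proof. elim: s => [|d s IH] x c //=. by rewrite -Hass IH. Qed.

Lemma prod_cat (T : Type) (z0 : T) (mul : T -> T -> T)
  (Hass : forall x y z, mul x (mul y z) = mul (mul x y) z) (s1 s2 : seq T) :
  s1 <> [::] -> s2 <> [::] ->
  Defs.seqprod z0 mul (s1 ++ s2) = mul (Defs.seqprod z0 mul s1) (Defs.seqprod z0 mul s2).
Proof.
case: s1 => [|a t1] // _; case: s2 => [|b t2] // _.
rewrite /= foldl_cat /=; exact: foldlK.
Qed.

Lemma prod_merge (T : Type) (z0 : T) (mul : T -> T -> T)
  (Hass : forall x y z, mul x (mul y z) = mul (mul x y) z) pre u v post :
  Defs.seqprod z0 mul (pre ++ mul u v :: post) = Defs.seqprod z0 mul (pre ++ u :: v :: post).
Proof. case: pre => [|a t] //=. by rewrite !foldl_cat /= Hass. Qed.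

Lemma set_nth_split (T : Type) (x0 : T) (l : seq T) j v :
  j < size l -> set_nth x0 l j v = take j l ++ v :: drop j.+1 l.
Proof. elim: l j => [|a l IH] [|j] //= Hj; first by rewrite drop0. by rewrite IH. Qed.

Lemma split2 (T : Type) (x0 : T) (t : seq T) j : j.+1 < size t ->
  t = take j t ++ nth x0 t j :: nth x0 t j.+1 :: drop j.+2 t.
Proof.
move=> Hj; rewrite -{1}(cat_take_drop j t) (drop_nth x0) ?(drop_nth x0 (n:=j.+1)) //.
exact: ltnW.
Qed.

Lemma adjL (T : Type) (z0 : T) (mul : T -> T -> T)
  (Hass : forall x y z, mul x (mul y z) = mul (mul x y) z) t1 t2 j X y Z :
  size t1 = size t2 -> j.+1 < size t1 ->
  nth z0 t1 j = mul X y -> nth z0 t1 j.+1 = Z ->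
  nth z0 t2 j = X -> nth z0 t2 j.+1 = mul y Z ->
  (forall k, k != j -> k != j.+1 -> nth z0 t1 k = nth z0 t2 k) ->
  Defs.seqprod z0 mul t1 = Defs.seqprod z0 mul t2.
Proof.
move=> Hs Hj H1 H2 H3 H4 Ho.
have Htk : take j t1 = take j t2.
  apply: (eq_from_nth (x0 := z0)); first by rewrite !size_take -Hs.
  move=> k; rewrite size_take; case: ifP => Hjs Hk; last first.
    by move: Hjs; rewrite (ltnW Hj).
  rewrite !nth_take //; apply: Ho; lia.
have Hdr : drop j.+2 t1 = drop j.+2 t2.
  apply: (eq_from_nth (x0 := z0)); first by rewrite !size_drop -Hs.
  move=> k _; rewrite !nth_drop; apply: Ho; lia.
rewrite (@split2 _ z0 t1 j Hj) (@split2 _ z0 t2 j) -?Hs // H1 H2 H3 H4 Htk Hdr.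
rewrite (@prod_merge _ _ _ Hass) -[in RHS]cat_rcons (@prod_merge _ _ _ Hass) cat_rcons.
by [].
Qed.

Lemma mapnth (T : Type) (x0 : T) n (l : seq T) :
  size l = n -> [seq nth x0 l (nat_of_ord i) | i : 'I_n <- enum 'I_n] = l.
Proof.
move=> Hl.
have -> : [seq nth x0 l (nat_of_ord i) | i : 'I_n <- enum 'I_n] = map (nth x0 l) (map val (enum 'I_n)).
  by rewrite -map_comp.
rewrite val_enum_ord -Hl; exact: mkseq_nth.
Qed.

Lemma move_lem (T : eqType) (z0 : T) (mul : T -> T -> T) K
  (Hsw : forall L a b R, K <= size R ->
     Defs.seqprod z0 mul (L ++ a :: b :: R) = Defs.seqprod z0 mul (L ++ b :: a :: R))
  M : forall L x R, K <= size R ->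
  Defs.seqprod z0 mul (L ++ x :: M ++ R) = Defs.seqprod z0 mul (L ++ M ++ x :: R).
Proof.
elim: M => [|m M IH] L x R HR //=.
rewrite Hsw; last by rewrite size_cat (leq_trans HR) // leq_addl.
by rewrite -cat_rcons IH // cat_rcons.
Qed.

Lemma perm_lem (T : eqType) (z0 : T) (mul : T -> T -> T) K
  (Hsw : forall L a b R, K <= size R ->
     Defs.seqprod z0 mul (L ++ a :: b :: R) = Defs.seqprod z0 mul (L ++ b :: a :: R))
  W : forall W' L R, K <= size R -> perm_eq W W' ->
  Defs.seqprod z0 mul (L ++ W ++ R) = Defs.seqprod z0 mul (L ++ W' ++ R).
Proof.
elim: W => [|x W IH] W' L R HR Hp.
  by case: W' Hp => // y W' /perm_size.
have Hx : x \in W' by rewrite -(perm_mem Hp) mem_head.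
case/splitPr: Hx Hp => W1 W2 Hp.
have Hp' : perm_eq W (W1 ++ W2).
  rewrite -(perm_cons x); apply: (perm_trans Hp).
  by rewrite -cat1s perm_catCA.
rewrite cat_cons -cat_rcons (IH _ _ _ HR Hp') cat_rcons -catA.
by rewrite (@move_lem _ _ _ _ Hsw) // ?size_cat ?(leq_trans HR) ?leq_addl // -catA.
Qed.

Local Open Scope ring_scope.

Theorem lemma4p2 (F : fieldType) (A : lmodType F) (mul : A -> A -> A)
    (Halg : assoc_algebra_mul mul) (q : F) (hq : q != 1)
    (n : nat) (Hn : (0 < n)%N) (s : 'S_n)
    (Hfirst : forall i : 'I_n, nat_of_ord i = 0%N -> nat_of_ord (s i) <> 0%N)
    (Hlast : forall i : 'I_n, nat_of_ord i = n.-1 -> nat_of_ord (s i) <> n.-1)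
    (Hid : satisfies_qperm_id mul q s) :
  eventually_commutative mul.
Proof.
case: Halg => Hass HL HR.
have mul0l : forall z, mul 0 z = 0.
  move=> z; have E := HL 1 0 0 z; rewrite !scale1r addr0 in E.
  by apply: (@addrI _ (mul 0 z)); rewrite addr0 -E.
have mulZl : forall a x z, mul (a *: x) z = a *: mul x z.
  by move=> a x z; rewrite -[a *: x]addr0 HL mul0l addr0.
pose i0 : 'I_n := Ordinal Hn.
pose P := (s^-1)%g i0.
have sP : s P = i0 := permKV s i0.
have P0 : nat_of_ord P != 0%N.
  apply/eqP => E; have EP : P = i0 by apply: val_inj.
  by apply: (Hfirst i0 erefl); rewrite -EP sP.
have Pmlt : ((nat_of_ord P).-1 < n)%N.
  exact: (leq_ltn_trans (leq_pred _) (ltn_ord P)).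
pose Pm : 'I_n := Ordinal Pmlt.
pose u := s Pm.
have PmP : (nat_of_ord Pm).+1 = nat_of_ord P by rewrite /= prednK // lt0n.
have u0 : nat_of_ord u != 0%N.
  apply/eqP => E; have : u = i0 by apply: val_inj.
  rewrite /u -sP => /perm_inj EE; move: PmP; rewrite EE; lia.
have Hu : (u < n)%N := ltn_ord u.
have NM : forall (g : 'I_n -> A) k (Hk : (k < n)%N),
    nth 0 [seq g i | i <- enum 'I_n] k = g (Ordinal Hk).
  move=> g k Hk; rewrite (nth_map i0) ?size_enum_ord //; congr g.
  by apply: val_inj; rewrite /= nth_enum_ord.
have Jex : forall (l : seq A) y, size l = n ->
    Defs.seqprod 0 mul (y :: l) = Defs.seqprod 0 mul (take u.+1 l ++ y :: drop u.+1 l).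
  move=> l y Hl.
  pose l1 := set_nth 0 l u (mul (nth 0 l u) y).
  pose l2 := set_nth 0 l 0%N (mul y (nth 0 l 0%N)).
  have Hl1 : size l1 = n by rewrite size_set_nth Hl; apply/maxn_idPr.
  have Hl2 : size l2 = n by rewrite size_set_nth Hl; apply/maxn_idPr.
  have E1 : Defs.seqprod 0 mul l1 = Defs.seqprod 0 mul (take u.+1 l ++ y :: drop u.+1 l).
    rewrite /l1 set_nth_split ?Hl // (@prod_merge _ _ _ Hass) -cat_rcons.
    by rewrite -(take_nth 0) // Hl.
  have E2 : Defs.seqprod 0 mul l2 = Defs.seqprod 0 mul (y :: l).
    rewrite /l2 set_nth_split ?Hl // take0 cat0s.
    have El : l = nth 0 l 0%N :: drop 1 l.
      by rewrite -(drop_nth 0) ?Hl // drop0.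
    by rewrite [in RHS]El.
  have H1 := Hid (fun i => nth 0 l1 i).
  have H2 := Hid (fun i => nth 0 l2 i).
  rewrite /wordprod (@mapnth _ 0 _ _ Hl1) in H1.
  rewrite /wordprod (@mapnth _ 0 _ _ Hl2) in H2.
  have E3 : Defs.seqprod 0 mul [seq nth 0 l1 (s i) | i <- enum 'I_n] =
            Defs.seqprod 0 mul [seq nth 0 l2 (s i) | i <- enum 'I_n].
    apply: (@adjL _ _ _ Hass _ _ Pm (nth 0 l u) y (nth 0 l 0%N)).
    - by rewrite !size_map.
    - by rewrite size_map size_enum_ord PmP.
    - rewrite (nth_map Pm) ?size_enum_ord // nth_ord_enum -/u.
      by rewrite /l1 nth_set_nth /= eqxx.
    - rewrite PmP (nth_map Pm) ?size_enum_ord // nth_ord_enum sP.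
      by rewrite /l1 nth_set_nth /= eq_sym (negbTE u0).
    - rewrite (nth_map Pm) ?size_enum_ord // nth_ord_enum -/u.
      by rewrite /l2 nth_set_nth /= (negbTE u0).
    - rewrite PmP (nth_map Pm) ?size_enum_ord // nth_ord_enum sP.
      by rewrite /l2 nth_set_nth /=.
    have G : forall j : 'I_n, (nat_of_ord j == nat_of_ord u) = false ->
        (nat_of_ord j == 0%N) = false -> nth 0 l1 j = nth 0 l2 j.
      by move=> j h1 h2; rewrite /l1 /l2 !nth_set_nth /= h1 h2.
    move=> k Hk1 Hk2; case: (ltnP k n) => Hkn; last first.
      by rewrite (nth_default 0) ?(nth_default 0) // size_map size_enum_ord.
    rewrite !(NM _ _ Hkn); apply: G.
    - apply/negbTE/eqP => E; have : s (Ordinal Hkn) = s Pm by apply: val_inj.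
      by move/perm_inj => EE; move: Hk1; rewrite -[k]/(nat_of_ord (Ordinal Hkn)) EE eqxx.
    - apply/negbTE/eqP => E; have : s (Ordinal Hkn) = s P by rewrite sP; apply: val_inj.
      by move/perm_inj => EE; move: Hk2; rewrite -[k]/(nat_of_ord (Ordinal Hkn)) EE -PmP eqxx.
  by rewrite -E2 -E1 H1 H2 E3.
pose b0 := (n - u.+1)%N.
have JR : forall y (C R : seq A), size C = u.+1 -> (b0 <= size R)%N ->
    Defs.seqprod 0 mul (y :: C ++ R) = Defs.seqprod 0 mul (C ++ y :: R).
  move=> y C R HC HRs.
  have Hsz : size (C ++ take b0 R) = n.
    by rewrite size_cat HC size_takel // /b0 subnKC.
  have HJ' := Jex (C ++ take b0 R) y Hsz.
  rewrite take_size_cat // drop_size_cat // in HJ'.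
  rewrite -(cat_take_drop b0 R).
  case E: (drop b0 R) => [|r R1].
    by rewrite !cats0 HJ'.
  have e1 : y :: C ++ take b0 R ++ r :: R1 = (y :: C ++ take b0 R) ++ r :: R1.
    by rewrite cat_cons catA.
  have e2 : C ++ y :: take b0 R ++ r :: R1 = (C ++ y :: take b0 R) ++ r :: R1.
    by rewrite -catA.
  rewrite e1 e2.
  rewrite (@prod_cat _ _ _ Hass (y :: C ++ take b0 R) (r :: R1)) //.
  rewrite (@prod_cat _ _ _ Hass (C ++ y :: take b0 R) (r :: R1)) ?HJ' //.
  by case: (C).
have JD : forall d y (C R : seq A), size C = (u.+1 + d)%N -> (b0 <= size R)%N ->
    Defs.seqprod 0 mul (y :: C ++ R) = Defs.seqprod 0 mul (C ++ y :: R).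
  elim=> [|d IH] y C R HC HRs; first by apply: JR; rewrite // HC addn0.
  case: C HC => [|c1 [|c2 rest]] HC; [by [] | by move: HC; rewrite /=; lia | ].
  have HC' : size (mul c1 c2 :: rest) = (u.+1 + d)%N by move: HC => /= [->]; lia.
  have := IH y _ R HC' HRs.
  have m1 := @prod_merge _ 0 _ Hass [:: y] c1 c2 (rest ++ R).
  rewrite /= in m1 *.
  by rewrite m1 => ->.
have J : forall y (C R : seq A), (u.+1 <= size C)%N -> (b0 <= size R)%N ->
    Defs.seqprod 0 mul (y :: C ++ R) = Defs.seqprod 0 mul (C ++ y :: R).
  move=> y C R HC HRs; apply: (JD (size C - u.+1)%N) => //; by rewrite subnKC.
have Hn' : (u.+1 + b0 = n)%N by rewrite /b0 subnKC.
have swap0 : forall a b (R : seq A), (n <= size R)%N ->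
    Defs.seqprod 0 mul (a :: b :: R) = Defs.seqprod 0 mul (b :: a :: R).
  move=> a b R HRs.
  have HC : size (take u.+1 R) = u.+1 by rewrite size_takel // (leq_trans Hu).
  have HR' : (b0 <= size (drop u.+1 R))%N by rewrite size_drop leq_subRL; lia.
  rewrite -(cat_take_drop u.+1 R).
  move: (take u.+1 R) (drop u.+1 R) HC HR' => C R' HC HR'.
  have e1 : Defs.seqprod 0 mul (a :: b :: C ++ R') = Defs.seqprod 0 mul (C ++ b :: a :: R').
    transitivity (Defs.seqprod 0 mul (b :: C ++ a :: R')).
      by apply: (J a (b :: C) R' _ HR'); rewrite /= HC.
    by apply: (J b C (a :: R')); rewrite ?HC // (leq_trans HR').
  have e2 : Defs.seqprod 0 mul (b :: a :: C ++ R') = Defs.seqprod 0 mul (C ++ b :: a :: R').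
    transitivity (Defs.seqprod 0 mul (a :: C ++ b :: R')).
      by apply: (J b (a :: C) R' _ HR'); rewrite /= HC.
    have := J a (C ++ [:: b]) R'; rewrite -!catA; apply => //.
    by rewrite size_cat HC leq_addr.
  by rewrite e1 e2.
have swapL : forall (L : seq A) a b (R : seq A), (n <= size R)%N ->
    Defs.seqprod 0 mul (L ++ a :: b :: R) = Defs.seqprod 0 mul (L ++ b :: a :: R).
  move=> [|h L] a b R HRs; first exact: swap0.
  by rewrite !(@prod_cat _ _ _ Hass (h :: L)) // swap0.
have nil0 : forall l : seq A, (n + n <= size l)%N -> Defs.seqprod 0 mul l = 0.
  move=> l Hl.
  have HW : size (take n l) = n by rewrite size_takel // (leq_trans _ Hl) // leq_addr.
  have HT : (n <= size (drop n l))%N by rewrite size_drop leq_subRL // (leq_trans _ Hl) // leq_addr.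
  rewrite -(cat_take_drop n l).
  move: (take n l) (drop n l) HW HT => W T HW HT.
  have Hw := Hid (fun i => nth 0 W i).
  rewrite /wordprod (@mapnth _ 0 _ _ HW) in Hw.
  set Ws := [seq nth 0 W (s i) | i <- enum 'I_n] in Hw.
  have HWs : size Ws = n by rewrite size_map size_enum_ord.
  have Wne : W <> [::] by move=> E; rewrite E /= in HW; lia.
  have Wsne : Ws <> [::] by move=> E; rewrite E /= in HWs; lia.
  have Tne : T <> [::] by move=> E; rewrite E /= in HT; lia.
  have Hp : perm_eq Ws W.
    rewrite /Ws -[X in perm_eq _ X](@mapnth _ 0 _ _ HW).
    have -> : [seq nth 0 W (s i) | i <- enum 'I_n] =
              [seq nth 0 W (nat_of_ord i) | i <- [seq s j | j <- enum 'I_n]].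
      exact: (@map_comp _ _ _ (fun i : 'I_n => nth 0 W i) (fun j => s j) (enum 'I_n)).
    apply: perm_map; apply: uniq_perm.
    - by rewrite (map_inj_uniq perm_inj) enum_uniq.
    - exact: enum_uniq.
    move=> x; rewrite mem_enum; apply/mapP; exists ((s^-1)%g x).
      by rewrite mem_enum.
    by rewrite permKV.
  have E : Defs.seqprod 0 mul (W ++ T) = q *: Defs.seqprod 0 mul (W ++ T).
    rewrite [LHS](@prod_cat _ _ _ Hass W T) //.
    rewrite Hw mulZl -(@prod_cat _ _ _ Hass Ws T) //.
    by rewrite -[Ws ++ T]cat0s (@perm_lem _ _ _ _ swapL Ws W [::] T HT Hp).
  move: E; set v := Defs.seqprod 0 mul (W ++ T) => E.
  have E' : (1 - q) *: v = 0 by rewrite scalerBl scale1r -E subrr.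
  have hq' : 1 - q != 0 by rewrite subr_eq0 eq_sym.
  by rewrite -[v]scale1r -(mulVf hq') -scalerA E' scaler0.
exists (n + n)%N => k Hk t x.
by rewrite /wordprod !nil0 // size_map size_enum_ord.
Qed.
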